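(* Let $F$ and $V=(v_{pq})$ be $n\times n$ real matrices and let $i\in\{1,\dots,n\}$. Suppose that $V_{[i,i]}$ is nonsingular. Consider $v_{ii}\to\infty$ with $F$ and all other entries of $V$ held fixed (so that $V$ is invertible for all sufficiently large $v_{ii}$). Then \[ \lim_{v_{ii}\to\infty}\rho(FV^{-1})=\rho\big(F_{[i,i]}(V_{[i,i]})^{-1}\big). \]
   Context: For a matrix $M$, $M_{[j,k]}$ denotes the matrix obtained from $M$ by deleting its $j$th row and $k$th column; $v_{pq}$ denotes the $(p,q)$ entry of $V$. $\rho(M)$ denotes the spectral radius of a square matrix $M$, i.e. the maximum modulus of its eigenvalues. *)

(* Defs.v *)
From HB Require Import structures.
From mathcomp Require Import all_boot all_order all_algebra.
From mathcomp Require Import all_classical all_reals all_analysis.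
From mathcomp Require Import complex.
Set Implicit Arguments. Unset Strict Implicit. Unset Printing Implicit Defensive.
Import Order.TTheory GRing.Theory Num.Theory.
Local Open Scope ring_scope.
Local Open Scope classical_set_scope.

(* Complex eigenvalues of a real square matrix: eigenvalues of its image in
   the complex numbers R[i]. *)
Definition cplx_mx (R : realType) (n : nat) (M : 'M[R]_n) : 'M[R[i]]_n :=
  map_mx (fun x : R => (x%:C)%C) M.

(* spectral radius: the maximum modulus of the (complex) eigenvalues,
   written as the supremum of this finite set (0 for the empty 0x0 case). *)
Definition spectral_radius (R : realType) (n : nat) (M : 'M[R]_n) : R :=
  sup [set Normc.normc z | z in [set z : R[i] | eigenvalue (cplx_mx M) z]].

Definition set_diag_entry (R : realType) (n : nat) (V : 'M[R]_n) (i : 'I_n) (t : R)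
  : 'M[R]_n := \matrix_(p, q) (if (p == i) && (q == i) then t else V p q).

Definition del_rc (R : realType) (n : nat) (M : 'M[R]_n.+1) (i : 'I_n.+1) : 'M[R]_n :=
  row' i (col' i M).

(* Main.v *)
Require Import Defs.
From HB Require Import structures.
From mathcomp Require Import all_boot all_order all_algebra.
From mathcomp Require Import all_classical all_reals all_analysis.
From mathcomp Require Import complex.
From mathcomp Require Import ring lra.
From mathcomp Require Import fingroup perm.
Set Implicit Arguments. Unset Strict Implicit. Unset Printing Implicit Defensive.
Import numFieldNormedType.Exports.
Import Order.TTheory GRing.Theory Num.Theory.
Local Open Scope ring_scope.
Local Open Scope classical_set_scope.
Local Open Scope complex_scope.
Section Gen.
Variable C : numDomainType.

Lemma prod_diff m (a b : 'I_m -> C) (K e : C) : 0 <= K -> 0 <= e ->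
  (forall k, `|a k| <= K) -> (forall k, `|b k| <= K) -> (forall k, `|a k - b k| <= e) ->
  `|\prod_k a k - \prod_k b k| <= m%:R * (1 + K) ^+ m * e.
Proof.
move=> K0 e0; elim: m a b => [|m IH] a b ha hb hab.
  by rewrite !big_ord0 subrr normr0 mul0r mul0r.
rewrite !big_ord_recr /=.
set A := \prod_(i < m) a (widen_ord _ i); set B := \prod_(i < m) b (widen_ord _ i).
have -> : A * a ord_max - B * b ord_max = (A - B) * a ord_max + B * (a ord_max - b ord_max).
  by rewrite mulrBl mulrBr addrA subrK.
have hAB : `|A - B| <= m%:R * (1 + K) ^+ m * e by apply: IH.
have hB : `|B| <= (1 + K) ^+ m.
  have -> : (1 + K) ^+ m = \prod_(i < m) (1 + K) by rewrite prodr_const card_ord.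
  rewrite /B normr_prod; apply: ler_prod => k _.
  by rewrite normr_ge0 /= (le_trans (hb _)) // lerDr.
have K1 : 0 <= 1 + K by rewrite addr_ge0.
apply: (le_trans (ler_normD _ _)); rewrite !normrM.
have h1 : `|A - B| * `|a ord_max| <= m%:R * (1 + K) ^+ m * e * K.
  by apply: ler_pM.
have h2 : `|B| * `|a ord_max - b ord_max| <= (1 + K) ^+ m * e.
  by apply: ler_pM.
apply: le_trans (lerD h1 h2) _.
rewrite exprSr -natr1 -subr_ge0.
set P := (1 + K) ^+ m.
have P0 : 0 <= P by rewrite exprn_ge0.
have -> : (m%:R + 1) * (P * (1 + K)) * e - (m%:R * P * e * K + P * e)
   = m%:R * P * e + P * e * K by ring.
by rewrite addr_ge0 // mulr_ge0 // mulr_ge0.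
Qed.

Lemma det_diff m (M N : 'M[C]_m) (K e : C) : 0 <= K -> 0 <= e ->
  (forall p q, `|M p q| <= K) -> (forall p q, `|N p q| <= K) ->
  (forall p q, `|M p q - N p q| <= e) ->
  `|\det M - \det N| <= (m`!)%:R * (m%:R * (1 + K) ^+ m * e).
Proof.
move=> K0 e0 hM hN hMN.
rewrite /determinant -sumrB.
apply: le_trans (ler_norm_sum _ _ _) _.
rewrite mulr_natl -card_Sn -sumr_const; apply: ler_sum => s _.
rewrite -mulrBr normrM normrX normrN normr1 expr1n mul1r.
by apply: prod_diff.
Qed.
End Gen.
Lemma char_horner (F : fieldType) n (A : 'M[F]_n) a :
  (char_poly A).[a] = \det (a%:M - A).
Proof.
rewrite /char_poly /determinant horner_sum; apply: eq_bigr => s _.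
rewrite hornerM horner_exp !hornerE; congr (_ * _).
rewrite (big_morph _ (fun p q => hornerM p q a) (hornerC 1 a)).
by apply: eq_bigr => i _; rewrite !mxE !(hornerE, hornerMn).
Qed.

Lemma seq_max (R : realDomainType) (T : eqType) (f : T -> R) (s : seq T) :
  s != [::] -> exists2 x, x \in s & forall y, y \in s -> f y <= f x.
Proof.
elim: s => // a [|b s] IH _.
  by exists a; rewrite ?mem_seq1 // => y; rewrite mem_seq1 => /eqP ->.
have [x xs hx] := IH isT.
have [le|lt] := leP (f a) (f x).
  exists x; first by rewrite inE xs orbT.
  by move=> y; rewrite inE => /orP [/eqP ->|/hx].
exists a; first by rewrite mem_head.
move=> y; rewrite inE => /orP [/eqP ->//|/hx ys].
exact: le_trans ys (ltW lt).
Qed.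

Lemma prod_lb (C : numDomainType) (r : seq C) (f : C -> C) c : 0 <= c ->
  (forall y, y \in r -> c <= f y) -> c ^+ size r <= \prod_(x <- r) f x.
Proof.
move=> c0; elim: r => [|a r IH] H; first by rewrite big_nil expr0.
rewrite big_cons /= exprS; apply: ler_pM => //.
- by rewrite exprn_ge0.
- by apply: H; rewrite mem_head.
by apply: IH => y yr; apply: H; rewrite inE yr orbT.
Qed.

Section CR.
Variable R : realType.
Local Notation C := (R[i]).

Lemma eig_roots m (M : 'M[C]_m.+1) : exists r : seq C,
  [/\ size r = m.+1, (forall z, eigenvalue M z = (z \in r)) &
      forall z, \det (z%:M - M) = \prod_(x <- r) (z - x)].
Proof.
have [r hr] := closed_field_poly_normal (char_poly M).
move: hr; rewrite (monicP (char_poly_monic M)) scale1r => hr.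
exists r; split.
- by have := size_char_poly M; rewrite hr size_prod_XsubC => -[].
- by move=> z; rewrite eigenvalue_root_char hr root_prod_XsubC.
- move=> z; rewrite -char_horner hr horner_prod; apply: eq_bigr => x _.
  by rewrite hornerXsubC.
Qed.

Lemma eig_close m (M : 'M[C]_m.+1) z : exists l,
  eigenvalue M l /\ `|z - l| ^+ m.+1 <= `|\det (z%:M - M)|.
Proof.
have [r [sr er dr]] := eig_roots M.
have [|l lr hl] := seq_max (fun x => - Normc.normc (z - x)) (s := r).
  by case: r sr {er dr}.
exists l; split; first by rewrite er.
rewrite dr normr_prod -sr; apply: prod_lb => // y /hl.
by rewrite lerN2 -lecR.
Qed.



Definition rhoC m (M : 'M[C]_m) : R :=
  sup [set Normc.normc z | z in [set z | eigenvalue M z]].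

Lemma rhoC_max m (M : 'M[C]_m.+1) : exists l, [/\ eigenvalue M l,
  forall u, eigenvalue M u -> Normc.normc u <= Normc.normc l & rhoC M = Normc.normc l].
Proof.
have [r [sr er _]] := eig_roots M.
have [|l lr hl] := seq_max (fun x => Normc.normc x) (s := r).
  by case: r sr {er}.
have hl' : forall u, eigenvalue M u -> Normc.normc u <= Normc.normc l.
  by move=> u; rewrite er => /hl.
exists l; split => //; first by rewrite er.
apply/le_anti/andP; split.
  apply: ge_sup; first by exists (Normc.normc l), l => //=; rewrite er.
  by move=> x [u /= eu <-]; apply: hl'.
apply: ub_le_sup; last by exists l => //=; rewrite er.
by exists (Normc.normc l) => x [u /= eu <-]; apply: hl'.
Qed.

Lemma rhoC0 (M : 'M[C]_0) : rhoC M = 0.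
Proof.
rewrite /rhoC (_ : [set _ | z in _] = set0) ?sup0 //.
apply/seteqP; split => x // [z /= /eigenvalueP [v _ vn0] _].
by move: vn0; rewrite [v]thinmx0 eqxx.
Qed.

Lemma rhoC_ge0 m (M : 'M[C]_m) : 0 <= rhoC M.
Proof.
case: m M => [|m] M; first by rewrite rhoC0.
have [l [_ _ ->]] := rhoC_max M.
by case: l => a b; exact: sqrtr_ge0.
Qed.

Lemma eig_bound m (M : 'M[C]_m.+1) u (K : C) : eigenvalue M u ->
  (forall p q, `|M p q| <= K) -> `|u| <= m.+1%:R * K.
Proof.
move=> /eigenvalueP [v hv vn0] hK.
have [|j _ hj] := seq_max (fun k => Normc.normc (v 0 k)) (s := enum 'I_m.+1).
  by rewrite -size_eq0 size_enum_ord.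
have hj' : forall k, `|v 0 k| <= `|v 0 j|.
  by move=> k; rewrite lecR; apply: hj; rewrite mem_enum.
have vj0 : 0 < `|v 0 j|.
  rewrite normr_gt0; apply: contra vn0 => /eqP vj0.
  apply/eqP/rowP => k; rewrite mxE; apply/eqP.
  by have := hj' k; rewrite vj0 normr0 normr_le0.
have e1 : u * v 0 j = \sum_k v 0 k * M k j.
  by have := congr1 (fun A : 'rV[C]_m.+1 => A 0 j) hv; rewrite !mxE => <-.
rewrite -(ler_pM2l vj0) mulrC -normrM e1.
apply: le_trans (ler_norm_sum _ _ _) _.
rewrite (_ : m.+1%:R * K = \sum_(k < m.+1) K); last first.
  by rewrite sumr_const card_ord mulr_natl.
rewrite mulr_sumr; apply: ler_sum => k _.
rewrite normrM; apply: ler_pM => //.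
Qed.
End CR.
Section Cont.
Variable R : realType.
Local Notation C := (R[i]).

Lemma cplxD (x y : R) : (x + y)%:C = x%:C + y%:C :> C. Proof. exact: rmorphD. Qed.
Lemma cplxM (x y : R) : (x * y)%:C = x%:C * y%:C :> C. Proof. exact: rmorphM. Qed.
Lemma cplxX (x : R) k : (x ^+ k)%:C = x%:C ^+ k :> C. Proof. exact: rmorphXn. Qed.
Lemma cplx1 : (1 : R)%:C = 1 :> C. Proof. exact: rmorph1. Qed.
Lemma cplxn k : (k%:R : R)%:C = k%:R :> C. Proof. exact: rmorph_nat. Qed.

Lemma normc_tri (x y : C) : Normc.normc x <= Normc.normc y + Normc.normc (x - y).
Proof.
rewrite -lecR cplxD; have := ler_normD y (x - y).
by rewrite addrC subrK.
Qed.

Lemma le_sum_nneg (I : finType) (f : I -> R) i : (forall j, 0 <= f j) -> f i <= \sum_j f j.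
Proof. by move=> h; rewrite (bigD1 i) //= lerDl sumr_ge0. Qed.

Lemma normc_ge0' (x : C) : 0 <= Normc.normc x.
Proof. by case: x => a b; exact: sqrtr_ge0. Qed.

Lemma small_pow m (x : C) (e : R) : 0 < e -> `|x| ^+ m.+1 < (e ^+ m.+1)%:C -> Normc.normc x < e.
Proof.
move=> e0 h; rewrite -ltcR; move: h.
rewrite rmorphXn /= ltr_pXn2r //.
by rewrite nnegrE ler0c ltW.
Qed.


Lemma rhoC_cont m T (F : set_system T) (FF : Filter F) (A : T -> 'M[C]_m.+1)
  (M : 'M[C]_m.+1) :
  (forall e : R, 0 < e -> \forall t \near F, forall p q, `|A t p q - M p q| <= e%:C) ->
  rhoC (A t) @[t --> F] --> rhoC M.
Proof.
move=> hA; apply/cvgrPdist_lt => eps eps0.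
have [l [el hl rl]] := rhoC_max M.
pose K0 : R := \sum_p \sum_q Normc.normc (M p q).
have hK0 : forall p q, `|M p q| <= K0%:C.
  move=> p q; rewrite lecR; apply: le_trans (le_sum_nneg p _) => //.
    by apply: le_sum_nneg => j; exact: normc_ge0'.
  by move=> j; apply: sumr_ge0 => k _; exact: normc_ge0'.
have K00 : 0 <= K0 by apply: sumr_ge0 => p _; apply: sumr_ge0 => q _; exact: normc_ge0'.
pose B : R := m.+1%:R * (K0 + 1).
have B0 : 0 <= B by rewrite mulr_ge0 // addr_ge0.
pose Kr : R := B + (K0 + 1).
have Kr0 : 0 <= Kr by rewrite addr_ge0 // addr_ge0.
pose c : R := (m.+1`!)%:R * (m.+1%:R * (1 + Kr) ^+ m.+1).
have c0 : 0 <= c by rewrite mulr_ge0 // mulr_ge0 // exprn_ge0 // addr_ge0.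
pose eta : R := Order.min 1 (eps ^+ m.+1 / (c + 1)).
have eta0 : 0 < eta by rewrite lt_min ltr01 /= divr_gt0 // ?exprn_gt0 // ltr_wpDl.
have eta1 : eta <= 1 by rewrite ge_min lexx.
have ceta : c * eta < eps ^+ m.+1.
  apply: (@le_lt_trans _ _ (c * (eps ^+ m.+1 / (c + 1)))).
    by rewrite ler_wpM2l // ge_min lexx orbT.
  rewrite mulrA ltr_pdivrMr ?ltr_wpDl // mulrC ltr_pM2l ?exprn_gt0 //.
  by rewrite ltrDl.
have key : forall X Y : 'M[C]_m.+1, (forall p q, `|X p q| <= Kr%:C) ->
    (forall p q, `|Y p q| <= Kr%:C) -> (forall p q, `|X p q - Y p q| <= eta%:C) ->
    `|\det X - \det Y| < (eps ^+ m.+1)%:C.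
  move=> X Y hX hY hXY.
  apply: le_lt_trans (det_diff _ _ hX hY hXY) _.
  - by rewrite ler0c.
  - by rewrite ler0c ltW.
  rewrite -ltcR in ceta; apply: le_lt_trans ceta.
  have -> : (c * eta)%:C = (m.+1)`!%:R * (m.+1%:R * (1 + Kr%:C) ^+ m.+1 * eta%:C).
    by rewrite /c !cplxM cplxX cplxD cplx1 !cplxn !mulrA.
  by [].
have entry : forall (X : 'M[C]_m.+1) z p q, `|z| <= B%:C ->
    `|X p q| <= (K0 + 1)%:C -> `|(z%:M - X) p q| <= Kr%:C.
  move=> X z p q hz hX; rewrite !mxE; apply: le_trans (ler_normB _ _) _.
  rewrite /Kr rmorphD; apply: lerD => //.
  case: (p == q); rewrite ?mulr1n ?mulr0n ?normr0 //.
  by rewrite ler0c.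
have dentry : forall (X Y : 'M[C]_m.+1) z p q,
    `|(z%:M - X) p q - (z%:M - Y) p q| = `|Y p q - X p q|.
  by move=> X Y z p q; rewrite !mxE opprB addrC addrA subrK.
have hM1 : forall p q, `|M p q| <= (K0 + 1)%:C.
  by move=> p q; apply: le_trans (hK0 p q) _; rewrite lecR lerDl.
have det0 : forall m' (X : 'M[C]_m'.+1) z, eigenvalue X z -> \det (z%:M - X) = 0.
  by move=> m' X z; rewrite eigenvalue_root_char -char_horner => /rootP.
near=> t.
have hAt : forall p q, `|A t p q - M p q| <= eta%:C by near: t; apply: hA.
have hAb : forall p q, `|A t p q| <= (K0 + 1)%:C.
  move=> p q; rewrite -[A t p q](subrK (M p q)).
  apply: le_trans (ler_normD _ _) _; rewrite rmorphD addrC lerD //.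
  by apply: le_trans (hAt p q) _; rewrite lecR.
have [u [eu hu ru]] := rhoC_max (A t).
have hXY : forall z p q, `|(z%:M - A t) p q - (z%:M - M) p q| <= eta%:C.
  by move=> z p q; rewrite dentry distrC.
rewrite rl ru ltr_distlC; apply/andP; split.
- have lB : `|l| <= B%:C.
    by apply: le_trans (eig_bound el hM1) _; rewrite cplxM cplxn.
  have hd := key _ _ (fun p q => entry _ _ p q lB (hAb p q))
     (fun p q => entry _ _ p q lB (hM1 p q)) (hXY l).
  rewrite (det0 _ M) // subr0 in hd.
  have [v [ev hv]] := eig_close (A t) l.
  have lv : Normc.normc (l - v) < eps := small_pow eps0 (le_lt_trans hv hd).
  apply: (@lt_le_trans _ _ (Normc.normc v)); last exact: hu v ev.
  rewrite ltrBlDr; apply: le_lt_trans (normc_tri l v) _.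
  by rewrite ltrD2l.
- have uB : `|u| <= B%:C.
    by apply: le_trans (eig_bound eu hAb) _; rewrite cplxM cplxn.
  have hd := key _ _ (fun p q => entry _ _ p q uB (hAb p q))
     (fun p q => entry _ _ p q uB (hM1 p q)) (hXY u).
  rewrite (det0 _ (A t)) // sub0r normrN in hd.
  have [w [ew hw]] := eig_close M u.
  have uw : Normc.normc (u - w) < eps := small_pow eps0 (le_lt_trans hw hd).
  apply: le_lt_trans (normc_tri u w) _.
  apply: (@lt_le_trans _ _ (Normc.normc w + eps)); first by rewrite ltrD2l.
  by rewrite lerD2r hl.
Unshelve. all: by end_near.
Qed.
End Cont.
Definition pad (K : pzRingType) n (i : 'I_n.+1) (X : 'M[K]_n) : 'M[K]_n.+1 :=
  \matrix_(p, q) match unlift i p, unlift i q with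
                 | Some a, Some b => X a b | _, _ => 0 end.

Lemma pad_lift (K : pzRingType) n i (X : 'M[K]_n) a b : pad i X (lift i a) (lift i b) = X a b.
Proof. by rewrite mxE !liftK. Qed.
Lemma pad_il (K : pzRingType) n i (X : 'M[K]_n) q : pad i X i q = 0.
Proof. by rewrite mxE unlift_none. Qed.
Lemma pad_ir (K : pzRingType) n i (X : 'M[K]_n) p : pad i X p i = 0.
Proof. by rewrite mxE unlift_none; case: unlift. Qed.

Section Inv.
Variable R : realType.
Variables (n : nat) (V : 'M[R]_n.+1) (i : 'I_n.+1).
Local Notation Vt t := (set_diag_entry V i t).

Lemma cof_Vt t j : cofactor (Vt t) i j = cofactor V i j.
Proof.
rewrite /cofactor; congr (_ * \det _); apply/matrixP => a b.
by rewrite !mxE eq_sym (negbTE (neq_lift i a)).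
Qed.

Lemma det_Vt t : \det (Vt t) = t * \det (del_rc V i) + \sum_(j | j != i) V i j * cofactor V i j.
Proof.
rewrite (expand_det_row _ i) (bigD1 i) //= cof_Vt mxE !eqxx /=; congr (_ * _ + _).
  by rewrite /cofactor addnn -mul2n exprM sqrrN !expr1n mul1r.
apply: eq_bigr => j jn; rewrite cof_Vt mxE eqxx /= (negbTE jn); done.
Qed.

Lemma VtW t (X : 'M[R]_n) : Vt t *m pad i X = V *m pad i X.
Proof.
apply/matrixP => p q; rewrite !mxE; apply: eq_bigr => k _.
rewrite mxE; case: (eqVneq k i) => [->|ki]; first by rewrite pad_il !mulr0.
by rewrite andbF.
Qed.

Lemma VW_rows (X : 'M[R]_n) : X = invmx (del_rc V i) -> del_rc V i \in unitmx ->
  forall c q, (V *m pad i X) (lift i c) q = (1%:M : 'M[R]_n.+1) (lift i c) q.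
Proof.
move=> -> hu c q; rewrite mxE (bigD1_ord i) //= pad_il mulr0 add0r.
case: (unliftP i q) => [b ->|->]; last first.
  by rewrite mxE eq_sym (negbTE (neq_lift i c)) big1 // => a _; rewrite pad_ir mulr0.
rewrite !mxE (inj_eq (@lift_inj _ i)).
have := congr1 (fun A : 'M[R]_n => A c b) (mulmxV hu); rewrite !mxE => <-.
by apply: eq_bigr => a _; rewrite pad_lift !mxE.
Qed.

Hypothesis hu : del_rc V i \in unitmx.
Let X := invmx (del_rc V i).
Let W := pad i X.
Let E := 1%:M - V *m W.
Let P := \matrix_(p, q) (cofactor V i p * E i q) : 'M[R]_n.+1.

Lemma inv_diff t : Vt t \in unitmx -> invmx (Vt t) - W = (\det (Vt t))^-1 *: P.
Proof.
move=> ht.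
have -> : invmx (Vt t) - W = invmx (Vt t) *m E.
  by rewrite /E mulmxBr mulmx1 -(VtW t) mulmxA mulVmx // mul1mx.
apply/matrixP => p q; rewrite !mxE (bigD1_ord i) //= big1 ?addr0; last first.
  move=> c _; have := VW_rows (erefl X) hu c q.
  rewrite /E => h.
  have -> : (1%:M - V *m W) (lift i c) q = 1%:M (lift i c) q - (V *m W) (lift i c) q.
    by rewrite [LHS]mxE [X in _ + X]mxE.
  by rewrite h subrr mulr0.
rewrite /invmx ht !mxE cof_Vt /cofactor !mulrA.
by congr (_ * (_ - _)); apply: eq_bigr => j _; rewrite /W.
Qed.

Lemma conv_FV (F : 'M[R]_n.+1) (e : R) : 0 < e ->
  \forall t \near +oo, Vt t \in unitmx /\
    forall p q, `|(F *m invmx (Vt t)) p q - (F *m W) p q| <= e.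
Proof.
move=> e0.
set d := \det (del_rc V i).
have d0 : 0 < `|d| by rewrite normr_gt0 -unitfE -unitmxE.
set c0 := \sum_(j | j != i) V i j * cofactor V i j.
set Q := F *m P.
set N := \sum_p \sum_q `|Q p q|.
have N0 : 0 <= N by apply: sumr_ge0 => p _; apply: sumr_ge0.
have hN : forall p q, `|Q p q| <= N.
  move=> p q; apply: le_trans (le_sum_nneg p _) => //.
    by apply: le_sum_nneg => j.
  by move=> j; apply: sumr_ge0.
have hQ : forall t, Vt t \in unitmx ->
    F *m invmx (Vt t) - F *m W = (\det (Vt t))^-1 *: Q.
  by move=> t ht; rewrite -mulmxBr inv_diff // -scalemxAr.
clearbody Q.
exists ((N / e + `|c0| + 1) / `|d|); split; first exact: num_real.
move=> t ht.
have T0 : 0 < (N / e + `|c0| + 1) / `|d|.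
  by rewrite divr_gt0 // ltr_wpDl // addr_ge0 // divr_ge0 // ltW.
have t0 : 0 < t := lt_trans T0 ht.
have hdet : N / e + 1 < `|\det (Vt t)|.
  rewrite det_Vt.
  have h1 : `|t * d| - `|c0| <= `|t * d + c0|.
    exact: lerB_normD.
  apply: lt_le_trans h1; rewrite ltrBrDr normrM (gtr0_norm t0) -addrA [1 + _]addrC addrA.
  by rewrite -ltr_pdivrMr.
have det0 : 0 < `|\det (Vt t)| := le_lt_trans (addr_ge0 (divr_ge0 N0 (ltW e0)) ler01) hdet.
have ut : Vt t \in unitmx by rewrite unitmxE unitfE -normr_gt0.
split => // p q.
have := congr1 (fun A : 'M[R]_n.+1 => A p q) (hQ t ut).
rewrite !mxE => ->.
rewrite normrM normrV ?unitfE -?normr_gt0 // mulrC ler_pdivrMr //.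
apply: le_trans (hN p q) _.
apply: le_trans (_ : N <= e * (N / e + 1)) _; last first.
  by rewrite ler_wpM2l // ltW.
by rewrite mulrDr mulrCA divff ?mulr1 ?lerDl ?ltW // gt_eqF.
Qed.
End Inv.
Section Eig.
Variables (K : fieldType) (n : nat) (F : 'M[K]_n.+1) (i : 'I_n.+1) (X : 'M[K]_n).

Lemma colF (v : 'rV[K]_n.+1) : v 0 i = 0 ->
  col' i (v *m F) = col' i v *m row' i (col' i F).
Proof.
move=> vi; apply/matrixP => z c; rewrite !mxE (bigD1_ord i) //= (ord1 z) vi mul0r add0r.
by apply: eq_bigr => a _; rewrite !mxE.
Qed.

Lemma padmul (u : 'rV[K]_n.+1) b : (u *m pad i X) 0 (lift i b) = (col' i u *m X) 0 b.
Proof.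
rewrite !mxE (bigD1_ord i) //= pad_il mulr0 add0r.
by apply: eq_bigr => a _; rewrite pad_lift !mxE.
Qed.

Lemma padmul_i (u : 'rV[K]_n.+1) : (u *m pad i X) 0 i = 0.
Proof. by rewrite !mxE big1 // => k _; rewrite pad_ir mulr0. Qed.

Lemma eig_pad z : eigenvalue (F *m pad i X) z ->
  z = 0 \/ eigenvalue (row' i (col' i F) *m X) z.
Proof.
move=> /eigenvalueP [v hv vn0].
have [->|z0] := eqVneq z 0; [by left | right].
have vi : v 0 i = 0.
  have := congr1 (fun A : 'rV[K]_n.+1 => A 0 i) hv.
  rewrite /= mulmxA padmul_i mxE => /esym /eqP.
  by rewrite mulf_eq0 (negbTE z0) /= => /eqP.
apply/eigenvalueP; exists (col' i v).
  apply/rowP => b; rewrite (mulmxA (col' i v)) -colF // -padmul -(mulmxA v) hv !mxE //.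
apply: contra vn0 => /eqP v0; apply/eqP/rowP => p; rewrite mxE.
case: (unliftP i p) => [a ->|->] //.
by have := congr1 (fun A : 'rV[K]_n => A 0 a) v0; rewrite !mxE.
Qed.

Lemma eig_pad2 z : eigenvalue (row' i (col' i F) *m X) z ->
  eigenvalue (F *m pad i X) z.
Proof.
move=> /eigenvalueP [w hw wn0].
pose v : 'rV[K]_n.+1 := \row_p match unlift i p with Some a => w 0 a | None => 0 end.
have vi : v 0 i = 0 by rewrite mxE unlift_none.
have cv : col' i v = w by apply/rowP => a; rewrite !mxE liftK.
apply/eigenvalueP; exists v.
  apply/rowP => q; case: (unliftP i q) => [b ->|->].
    by rewrite mulmxA padmul colF // cv -mulmxA hw !mxE liftK.
  by rewrite mulmxA padmul_i !mxE unlift_none mulr0.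
apply: contra wn0 => /eqP v0; by rewrite -cv v0; apply/eqP/rowP => a; rewrite !mxE.
Qed.
End Eig.

Section Final.
Variable R : realType.
Local Notation C := (R[i]).

Lemma cplx0 : (0 : R)%:C = 0 :> C. Proof. exact: rmorph0. Qed.
Lemma cplxB (x y : R) : (x - y)%:C = x%:C - y%:C :> C. Proof. exact: rmorphB. Qed.

Lemma rhoC_ub m (M : 'M[C]_m) u : eigenvalue M u -> Normc.normc u <= rhoC M.
Proof.
case: m M => [|m] M.
  by move=> /eigenvalueP [v _ vn0]; move: vn0; rewrite [v]thinmx0 eqxx.
by have [l [_ hl ->]] := rhoC_max M; apply: hl.
Qed.

Lemma rhoC_le m (M : 'M[C]_m) b : 0 <= b ->
  (forall u, eigenvalue M u -> Normc.normc u <= b) -> rhoC M <= b.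
Proof.
case: m M => [|m] M b0 h; first by rewrite rhoC0.
by have [l [el _ ->]] := rhoC_max M; apply: h.
Qed.

Lemma rho_pad n (G : 'M[C]_n.+1) (i : 'I_n.+1) (Y : 'M[C]_n) :
  rhoC (G *m pad i Y) = rhoC (row' i (col' i G) *m Y).
Proof.
have [l [el hl ->]] := rhoC_max (G *m pad i Y).
apply/le_anti/andP; split.
  case: (eig_pad el) => [->|].
    by rewrite (_ : Normc.normc 0 = 0) ?rhoC_ge0 // Normc.normc0.
  exact: rhoC_ub.
apply: rhoC_le; first exact: normc_ge0'.
by move=> u /eig_pad2 /hl.
Qed.

Lemma cplx_mulmx m p q (A : 'M[R]_(m, p)) (B : 'M[R]_(p, q)) :
  map_mx (fun x : R => (x%:C)%C) (A *m B) =
  map_mx (fun x : R => (x%:C)%C) A *m map_mx (fun x : R => (x%:C)%C) B.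
Proof. exact: map_mxM. Qed.

Lemma normc_R (x : R) : Normc.normc (x%:C) = `|x|.
Proof. by rewrite /= expr0n addr0 sqrtr_sqr. Qed.

Lemma normCR (x : R) : `|(x%:C : C)| = (`|x|)%:C.
Proof. by rewrite -normc_R. Qed.

End Final.

Local Close Scope complex_scope.

Theorem corollary2p3 (R : realType) (n : nat) (F V : 'M[R]_n.+1) (i : 'I_n.+1) :
  del_rc V i \in unitmx ->
  spectral_radius (F *m invmx (set_diag_entry V i t))
    @[t --> +oo] --> spectral_radius (del_rc F i *m invmx (del_rc V i)).
Proof.
move=> hu.
set X := invmx (del_rc V i).
have -> : spectral_radius (del_rc F i *m X) = rhoC (cplx_mx (F *m pad i X)).
  rewrite /spectral_radius -/(rhoC _) /cplx_mx !cplx_mulmx.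
  have -> : map_mx (fun x : R => (x%:C)%C) (pad i X) = pad i (map_mx (fun x : R => (x%:C)%C) X).
    by apply/matrixP => a b; rewrite !mxE; case: (unlift i a) => [?|]; case: (unlift i b) => [?|]; rewrite ?cplx0 ?mxE.
  rewrite rho_pad.
  have -> : map_mx (fun x : R => (x%:C)%C) (del_rc F i) =
     row' i (col' i (map_mx (fun x : R => (x%:C)%C) F)).
    by apply/matrixP => a b; rewrite !mxE.
  by [].
apply: rhoC_cont => e e0.
near=> t.
have [_ h] : set_diag_entry V i t \in unitmx /\
    forall p q, `|(F *m invmx (set_diag_entry V i t)) p q - (F *m pad i X) p q| <= e.
  by near: t; exact: conv_FV.
move=> p q.
have E1 : forall M : 'M[R]_n.+1, cplx_mx M p q = ((M p q)%:C)%C by move=> M; rewrite mxE.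
rewrite !E1 -cplxB normCR lecR; exact: h.
Unshelve. all: by end_near.
Qed.
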